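(* Assume that $f$ is convex and $L$-smooth relative to $d$ on $Q$ for some $L>0$, that the Bregman divergence $V$ satisfies the triangular scaling property with scaling factor $\gamma=2$, and that for every $k\ge 0$ the pairs $(f_{\delta_k}(y),\nabla f_{\delta_k}(y))$ used by Algorithm AdapFGM are $(\delta_k,L)$-oracles of $f$ at every point $y\in Q$. Let $x_*$ be a minimizer of $f$ on $Q$, and let $R>0$ satisfy $V(x_*,x_0)\le R^2$. Then for every $N\ge 1$ the iterates of Algorithm AdapFGM (started with $L_0\in(0,2L)$) satisfy $$f(x_N)-f(x_* )\le \frac{8LR^2}{(N+1)^2}+\frac{2\sum_{k=0}^{N-1}A_{k+1}\delta_k}{A_N}.$$
   Context: Setting. $\mathbb{E}$ is a finite-dimensional real vector space with a norm $\|\cdot\|$ and dual space $\mathbb{E}^*$; $\langle g,x\rangle$ denotes the value of $g\in\mathbb{E}^*$ at $x\in\mathbb{E}$. $Q\subset\mathbb{E}$ is a closed convex set. $f:Q\to\mathbb{R}$ is convex and differentiable on an open set containing the relative interior $\mathrm{rint}\,Q$. The prox-function $d:Q\to\mathbb{R}$ is continuously differentiable and $1$-strongly convex with respect to $\|\cdot\|$. The Bregman divergence is $V(x,y)=d(x)-d(y)-\langle\nabla d(y),x-y\rangle$. All minimization subproblems appearing in the algorithms are assumed to have minimizers. Relative smoothness: $f$ is $L$-smooth relative to $d$ on $Q$ if $f(y)\le f(x)+\langle\nabla f(x),y-x\rangle+LV(y,x)$ for all $x\in\mathrm{rint}\,Q$, $y\in Q$. Triangular scaling property with factor $\gamma>0$: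 $V((1-\theta)x+\theta z,(1-\theta)x+\theta\tilde z)\le\theta^{\gamma}V(z,\tilde z)$ for all $x,z,\tilde z\in Q$ and all $\theta\in[0,1]$. $(\delta,L)$-oracle: a pair $(f_\delta(y),\nabla f_\delta(y))\in\mathbb{R}\times\mathbb{E}^*$ is a $(\delta,L)$-oracle of $f$ at $y$ if $0\le f(x)-\big(f_\delta(y)+\langle\nabla f_\delta(y),x-y\rangle\big)\le LV(x,y)+\delta$ for all $x\in Q$. Algorithm AdapFGM. Input: $x_0\in Q$, positive numbers $\{\delta_k\}_{k\ge0}$, and $L_0>0$. Set $y_0=u_0=x_0$, $\alpha_0=0$, $A_0=0$. For $k=0,1,2,\dots$: find the smallest integer $i_k\ge0$ such that, with $L_{k+1}=2^{i_k-1}L_k$, $\alpha_{k+1}$ the largest root of $A_k+\alpha=L_{k+1}\alpha^2$, $A_{k+1}=A_k+\alpha_{k+1}$ (so $A_{k+1}=L_{k+1}\alpha_{k+1}^2$), $y_{k+1}=\frac{\alpha_{k+1}u_k+A_kx_k}{A_{k+1}}$, $u_{k+1}=\arg\min_{x\in Q}\{\alpha_{k+1}\langle\nabla f_{\delta_k}(y_{k+1}),x-y_{k+1}\rangle+V(x,u_k)\}$, $x_{k+1}=\frac{\alpha_{k+1}u_{k+1}+A_kx_k}{A_{k+1}}$, the inequality $f_{\delta_k}(x_{k+1})\le f_{\delta_k}(y_{k+1})+\langle\nabla f_{\delta_k}(y_{k+1}),x_{k+1}-y_{k+1}\rangle+L_{k+1}V(x_{k+1},y_{k+1})+\delta_k$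 holds; these $L_{k+1},\alpha_{k+1},A_{k+1},y_{k+1},u_{k+1},x_{k+1}$ are the next iterates. *)

(* Defs.v *)
From HB Require Import structures.
From mathcomp Require Import all_boot all_order all_algebra.
From mathcomp Require Import all_classical all_reals all_analysis.
Set Implicit Arguments. Unset Strict Implicit. Unset Printing Implicit Defensive.
Import Order.TTheory GRing.Theory Num.Theory.
Import numFieldNormedType.Exports.
Local Open Scope classical_set_scope.
Local Open Scope ring_scope.

(* The space E is R^n realised as row vectors 'rV[R]_n; its dual E^* is
   identified with 'rV[R]_n through the pairing below. *)
Definition dual_pair (R : realType) (n : nat) (g x : 'rV[R]_n) : R :=
  \sum_(i < n) g 0 i * x 0 i.

Definition is_norm (R : realType) (n : nat) (nrm : 'rV[R]_n -> R) : Prop :=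
  (forall x y, nrm (x + y) <= nrm x + nrm y) /\
  (forall (a : R) x, nrm (a *: x) = `|a| * nrm x) /\
  (forall x, nrm x = 0 -> x = 0).

Definition convex_set_E (R : realType) (n : nat) (Q : set 'rV[R]_n) : Prop :=
  forall x y (t : R), Q x -> Q y -> 0 <= t <= 1 -> Q (t *: x + (1 - t) *: y).

Definition convex_fun_on (R : realType) (n : nat) (Q : set 'rV[R]_n)
  (f : 'rV[R]_n -> R) : Prop :=
  forall x y (t : R), Q x -> Q y -> 0 <= t <= 1 ->
    f (t *: x + (1 - t) *: y) <= t * f x + (1 - t) * f y.

Definition strongly_convex1_on (R : realType) (n : nat) (nrm : 'rV[R]_n -> R)
  (Q : set 'rV[R]_n) (d : 'rV[R]_n -> R) : Prop :=
  forall x y (t : R), Q x -> Q y -> 0 <= t <= 1 ->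
    d (t *: x + (1 - t) *: y)
      <= t * d x + (1 - t) * d y - t * (1 - t) / 2 * nrm (x - y) ^+ 2.

Definition aff_hull (R : realType) (n : nat) (Q : set 'rV[R]_n) : set 'rV[R]_n :=
  [set z | exists (m : nat) (p : 'I_m -> 'rV[R]_n) (w : 'I_m -> R),
     (forall i, Q (p i)) /\ \sum_(i < m) w i = 1 /\ z = \sum_(i < m) w i *: p i].

Definition rint (R : realType) (n : nat) (nrm : 'rV[R]_n -> R)
  (Q : set 'rV[R]_n) : set 'rV[R]_n :=
  [set x | Q x /\ exists e : R, 0 < e /\
     forall z, aff_hull Q z -> nrm (z - x) < e -> Q z].

Definition bregman (R : realType) (n : nat) (d : 'rV[R]_n -> R)
  (x y : 'rV[R]_n) : R :=
  d x - d y - 'd d y (x - y).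

Definition rel_smooth (R : realType) (n : nat) (nrm : 'rV[R]_n -> R)
  (Q : set 'rV[R]_n) (f d : 'rV[R]_n -> R) (L : R) : Prop :=
  forall x y, rint nrm Q x -> Q y ->
    f y <= f x + 'd f x (y - x) + L * bregman d y x.

Definition tri_scaling (R : realType) (n : nat) (Q : set 'rV[R]_n)
  (d : 'rV[R]_n -> R) (gamma : R) : Prop :=
  forall x z zt (theta : R), Q x -> Q z -> Q zt -> 0 <= theta <= 1 ->
    bregman d ((1 - theta) *: x + theta *: z) ((1 - theta) *: x + theta *: zt)
      <= theta `^ gamma * bregman d z zt.

Definition is_oracle (R : realType) (n : nat) (Q : set 'rV[R]_n)
  (f d : 'rV[R]_n -> R) (delta L : R) (y : 'rV[R]_n) (fy : R) (gy : 'rV[R]_n)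
  : Prop :=
  forall x, Q x ->
    0 <= f x - (fy + dual_pair gy (x - y)) /\
    f x - (fy + dual_pair gy (x - y)) <= L * bregman d x y + delta.

Definition is_argmin (R : realType) (n : nat) (Q : set 'rV[R]_n)
  (phi : 'rV[R]_n -> R) (m : 'rV[R]_n) : Prop :=
  Q m /\ forall z, Q z -> phi m <= phi z.

Definition largest_root (R : realType) (Ak Lk1 alpha : R) : Prop :=
  Ak + alpha = Lk1 * alpha ^+ 2 /\
  forall b, Ak + b = Lk1 * b ^+ 2 -> b <= alpha.

(* One trial of iteration k of AdapFGM with trial constant L':
   computes alpha', A' = Ak + alpha', y', u' (an argmin), x'. *)
Definition adap_trial (R : realType) (n : nat) (Q : set 'rV[R]_n)
  (d : 'rV[R]_n -> R) (fo : 'rV[R]_n -> R) (go : 'rV[R]_n -> 'rV[R]_n)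
  (Ak : R) (xk uk : 'rV[R]_n)
  (L' alpha' A' : R) (y' u' x' : 'rV[R]_n) : Prop :=
  [/\ largest_root Ak L' alpha',
      A' = Ak + alpha',
      y' = (alpha' / A') *: uk + (Ak / A') *: xk,
      is_argmin Q (fun z => alpha' * dual_pair (go y') (z - y') + bregman d z uk) u'
    & x' = (alpha' / A') *: u' + (Ak / A') *: xk].

Definition adap_test (R : realType) (n : nat) (d : 'rV[R]_n -> R)
  (fo : 'rV[R]_n -> R) (go : 'rV[R]_n -> 'rV[R]_n) (delta L' : R)
  (y' x' : 'rV[R]_n) : Prop :=
  fo x' <= fo y' + dual_pair (go y') (x' - y') + L' * bregman d x' y' + delta.

(* A complete run of Algorithm AdapFGM: sequences Ls (L_k), al (alpha_k),
   A (A_k), y, u, x, and the line-search exponents i_k.  The oracle used at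
   iteration k is (fo k, go k) = (f_{delta_k}, grad f_{delta_k}). *)
Definition adapfgm_run (R : realType) (n : nat) (Q : set 'rV[R]_n)
  (d : 'rV[R]_n -> R) (fo : nat -> 'rV[R]_n -> R)
  (go : nat -> 'rV[R]_n -> 'rV[R]_n) (delta : nat -> R)
  (x0 : 'rV[R]_n) (L0 : R)
  (Ls al A : nat -> R) (y u x : nat -> 'rV[R]_n) (i : nat -> nat) : Prop :=
  [/\ Ls 0%N = L0, al 0%N = 0 /\ A 0%N = 0, y 0%N = x0 /\ u 0%N = x0 /\ x 0%N = x0 &
   forall k : nat,
     [/\ Ls k.+1 = 2 ^+ (i k) / 2 * Ls k,
         adap_trial Q d (fo k) (go k) (A k) (x k) (u k)
           (Ls k.+1) (al k.+1) (A k.+1) (y k.+1) (u k.+1) (x k.+1),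
         adap_test d (fo k) (go k) (delta k) (Ls k.+1) (y k.+1) (x k.+1)
       & forall j : nat, (j < i k)%N ->
           exists (a' A' : R) (y' u' x' : 'rV[R]_n),
             adap_trial Q d (fo k) (go k) (A k) (x k) (u k)
               (2 ^+ j / 2 * Ls k) a' A' y' u' x' /\
             ~ adap_test d (fo k) (go k) (delta k) (2 ^+ j / 2 * Ls k) y' x']].

(* Main.v *)
Require Import Defs.
From HB Require Import structures.
From mathcomp Require Import all_boot all_order all_algebra.
From mathcomp Require Import all_classical all_reals all_analysis.
From mathcomp Require Import ring lra.
Import Order.TTheory GRing.Theory Num.Theory.
Import numFieldNormedType.Exports.
Local Open Scope classical_set_scope.
Local Open Scope ring_scope.

Lemma dir_ge (R : realType) n (d : 'rV[R]_n -> R) u v c :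
  differentiable d u ->
  (forall t : R, 0 < t -> t <= 1 -> t * c <= d (t *: v + u) - d u) ->
  c <= 'd d u v.
Proof.
move=> dd H; rewrite -deriveE //.
have dv : derivable d u v by exact: diff_derivable.
rewrite /derive cvg_at_rightE //.
apply: limr_ge.
  move/cvg_ex: dv => [l hl]; apply/cvg_ex; exists l.
  apply: cvg_trans hl; apply: cvg_app.
  move=> A [e egt0 Ae]; exists e => // x xe xgt0; apply: Ae => //.
  exact/lt0r_neq0.
near=> h.
have h0 : 0 < h by near: h; exists 1 => /=.
have h1 : h <= 1.
  near: h; exists 1 => //= h; rewrite /= distrC subr0 => /(le_lt_trans (ler_norm _)) /ltW //.
rewrite /= -[X in X <= _](mulKf (lt0r_neq0 h0)) ler_pM2l ?invr_gt0 //.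
exact: H.
Unshelve. all: by end_near. Qed.

Lemma dir_le (R : realType) n (d : 'rV[R]_n -> R) u v c :
  differentiable d u ->
  (forall t : R, 0 < t -> t <= 1 -> d (t *: v + u) - d u <= t * c) ->
  'd d u v <= c.
Proof.
move=> dd H; rewrite -deriveE //.
have dv : derivable d u v by exact: diff_derivable.
rewrite /derive cvg_at_rightE //.
apply: limr_le.
  move/cvg_ex: dv => [l hl]; apply/cvg_ex; exists l.
  apply: cvg_trans hl; apply: cvg_app.
  move=> A [e egt0 Ae]; exists e => // x xe xgt0; apply: Ae => //.
  exact/lt0r_neq0.
near=> h.
have h0 : 0 < h by near: h; exists 1 => /=.
have h1 : h <= 1.
  near: h; exists 1 => //= h; rewrite /= distrC subr0 => /(le_lt_trans (ler_norm _)) /ltW //.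
rewrite /= -[X in _ <= X](mulKf (lt0r_neq0 h0)) ler_pM2l ?invr_gt0 //.
exact: H.
Unshelve. all: by end_near. Qed.

Lemma arith1 (R: realFieldType) (a t P P0 D D0 w u k : R) :
  a*P0 + (u - k - D0) <= a*(t*P) + a*P0 + (w - k - (t*D+D0)) -> t*(-a*P + D) <= w - u.
Proof. move=> H. have -> : t*(-a*P + D) = -(a*(t*P)) + t*D by ring. lra. Qed.
Lemma arith3 (R: realFieldType) (a P D D0 Dup dz duk dup : R) :
  -a*P + D <= Dup -> a * - P <= dz - duk - (D + D0) - (dz - dup - Dup) - (dup - duk - D0).
Proof. move=> H. have -> : a * - P = -a * P by ring. lra. Qed.

Section Helpers.
Variables (R : realType) (n : nat).
Implicit Types (g x y z : 'rV[R]_n).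

Lemma dpD g x y : dual_pair g (x + y) = dual_pair g x + dual_pair g y.
Proof. by rewrite /dual_pair -big_split; apply: eq_bigr => i _; rewrite mxE mulrDr. Qed.
Lemma dpZ g (a : R) x : dual_pair g (a *: x) = a * dual_pair g x.
Proof.
rewrite /dual_pair mulr_sumr; apply: eq_bigr => i _; rewrite mxE.
by rewrite mulrCA.
Qed.
Lemma dpN g x : dual_pair g (- x) = - dual_pair g x.
Proof. by rewrite -scaleN1r dpZ mulN1r. Qed.
Lemma dpB g x y : dual_pair g (x - y) = dual_pair g x - dual_pair g y.
Proof. by rewrite dpD dpN. Qed.
Lemma dp0 g : dual_pair g 0 = 0.
Proof. by rewrite -(scale0r 0) dpZ mul0r. Qed.

Lemma breg_self (d : 'rV[R]_n -> R) x : bregman d x x = 0.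
Proof. by rewrite /bregman !subrr linear0 subrr. Qed.

Lemma comb_eq x z (t : R) : t *: x + (1 - t) *: z = t *: (x - z) + z.
Proof. by apply/rowP => i; rewrite !mxE; ring. Qed.

End Helpers.

Lemma breg_nonneg (R : realType) n (nrm : 'rV[R]_n -> R) (Q : set 'rV[R]_n) d z u :
  convex_set_E Q -> strongly_convex1_on nrm Q d -> Q z -> Q u ->
  differentiable d u -> 0 <= bregman d z u.
Proof.
move=> cQ sc Qz Qu du.
have : 'd d u (z - u) <= d z - d u.
  apply: dir_le => // t t0 t1; rewrite -comb_eq.
  have := sc z u t Qz Qu; rewrite (ltW t0) t1 => /(_ isT).
  have : 0 <= t * (1 - t) / 2 * nrm (z - u) ^+ 2.
    by apply: mulr_ge0; [apply: mulr_ge0; [apply: mulr_ge0; lra|lra]|apply: sqr_ge0].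
  move=> K H; lra.
rewrite /bregman; lra.
Qed.

Lemma three_point (R : realType) n (Q : set 'rV[R]_n) d (a : R) g y uk up z :
  convex_set_E Q -> (forall w, Q w -> differentiable d w) ->
  is_argmin Q (fun w => a * dual_pair g (w - y) + bregman d w uk) up -> Q z ->
  a * dual_pair g (up - z) <= bregman d z uk - bregman d z up - bregman d up uk.
Proof.
move=> cQ dQ [Qup minup] Qz.
have key : - a * dual_pair g (z - up) + 'd d uk (z - up) <= 'd d up (z - up).
  apply: dir_ge; first exact: dQ.
  move=> t t0 t1.
  have Qw : Q (t *: (z - up) + up).
    by rewrite -comb_eq; apply: cQ => //; rewrite (ltW t0) t1.
  have := minup _ Qw; rewrite /bregman.
  have -> : t *: (z - up) + up - y = t *: (z - up) + (up - y) by rewrite addrA.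
  have -> : t *: (z - up) + up - uk = t *: (z - up) + (up - uk) by rewrite addrA.
  set P := dual_pair g (z - up); set P0 := dual_pair g (up - y).
  set D := 'd d uk (z - up); set D0 := 'd d uk (up - uk).
  have -> : dual_pair g (t *: (z - up) + (up - y)) = t * P + P0 by rewrite dpD dpZ.
  have -> : 'd d uk (t *: (z - up) + (up - uk)) = t * D + D0.
    by rewrite linearD linearZ.
  rewrite mulrDr; exact: arith1.
rewrite /bregman.
have -> : z - uk = (z - up) + (up - uk) by rewrite addrA subrK.
rewrite linearD /=.
have -> : up - z = - (z - up) by rewrite opprB.
rewrite dpN.
move: key; exact: arith3.
Qed.

Lemma root_pos (R : realType) (Ak L' a : R) :
  0 <= Ak -> 0 < L' -> largest_root Ak L' a -> 0 < a.
Proof.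
move=> A0 L0 [eq big].
set s := Num.sqrt (1 + 4 * L' * Ak).
have s0 : 0 <= s := sqrtr_ge0 _.
have ss : s ^+ 2 = 1 + 4 * L' * Ak.
  rewrite sqr_sqrtr //; apply: addr_ge0 => //; apply: mulr_ge0 => //.
  by apply: mulr_ge0; lra.
have L'0 : L' != 0 by lra.
have eAk : Ak = (s ^+ 2 - 1) / (4 * L') by rewrite ss; field; lra.
have H : Ak + (1 + s) / (2 * L') = L' * ((1 + s) / (2 * L')) ^+ 2.
  by rewrite eAk; field; lra.
have := big _ H.
have : 0 < (1 + s) / (2 * L') by apply: divr_gt0; lra.
lra.
Qed.

Lemma trial_Q (R : realType) n (Q : set 'rV[R]_n) d fo go Ak xk uk L' a A' y' u' x' :
  convex_set_E Q -> 0 <= Ak -> 0 < L' -> Q xk -> Q uk ->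
  adap_trial Q d fo go Ak xk uk L' a A' y' u' x' ->
  [/\ 0 < a, 0 < A', Q y', Q u' & Q x'].
Proof.
move=> cQ A0 L0 Qx Qu [rt eA ey [Qu' _] ex].
have a0 := @root_pos _ Ak L' a A0 L0 rt.
have A'0 : 0 < A' by lra.
have e1 : Ak / A' = 1 - a / A' by rewrite eA; field; lra.
have t01 : 0 <= a / A' <= 1.
  apply/andP; split; first by apply: divr_ge0; lra.
  by rewrite ler_pdivrMr // mul1r; lra.
split => //.
  by rewrite ey e1; apply: cQ.
by rewrite ex e1; apply: cQ.
Qed.

Lemma arith_pass {R : realFieldType} {L L' V fx fox foy G G0 dl : R} :
  L <= L' -> 0 <= V -> fx - (foy + G) <= L * V + dl -> 0 <= fx - (fox + G0) -> G0 = 0 ->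
  fox <= foy + G + L' * V + dl.
Proof.
move=> h1 h2 h3 h4 h5; have : L * V <= L' * V by apply: ler_wpM2r.
rewrite h5 in h4; lra.
Qed.

Lemma trial_pass (R : realType) n (nrm : 'rV[R]_n -> R) (Q : set 'rV[R]_n) f d fo go dl L Ak xk uk L' a A' y' u' x' :
  convex_set_E Q -> strongly_convex1_on nrm Q d -> (forall z, Q z -> differentiable d z) ->
  (forall z, Q z -> is_oracle Q f d dl L z (fo z) (go z)) ->
  0 <= Ak -> 0 < L' -> L <= L' -> Q xk -> Q uk ->
  adap_trial Q d fo go Ak xk uk L' a A' y' u' x' ->
  adap_test d fo go dl L' y' x'.
Proof.
move=> cQ sc dQ orc A0 L0 LL Qx Qu tr.
have [_ _ Qy Qu' Qx'] := @trial_Q _ _ Q d fo go Ak xk uk L' a A' y' u' x' cQ A0 L0 Qx Qu tr.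
rewrite /adap_test.
have [h3 _] := orc y' Qy x' Qx'.
have [_ h3'] := orc y' Qy x' Qx'.
have [h4 _] := orc x' Qx' x' Qx'.
apply: (arith_pass LL (@breg_nonneg _ _ nrm Q d x' y' cQ sc Qx' Qy (dQ _ Qy)) h3' h4).
by rewrite subrr dp0.
Qed.

Lemma arith_step {R : realFieldType} {A' Ak a L' th fx' fox' foy' G Gu Gz Gx fxk fz Vxy Vuu Vzk Vzu dl : R} :
  A' = Ak + a -> 0 < A' -> 0 <= Ak -> 0 <= a -> 0 < L' ->
  A' * G = a * (Gu + Gz) + Ak * Gx ->
  0 <= fxk - (foy' + Gx) ->
  0 <= fz - (foy' + Gz) ->
  fx' - fox' <= dl ->
  fox' <= foy' + G + L' * Vxy + dl ->
  a * Gu <= Vzk - Vzu - Vuu ->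
  Vxy <= th ^+ 2 * Vuu ->
  A' * L' * th ^+ 2 = 1 ->
  A' * fx' <= Ak * fxk + a * fz + Vzk - Vzu + 2 * A' * dl.
Proof.
move=> eA A0 Ak0 a0 L0 hE h1 h2 h3 h4 h5 h6 h7.
have p1 : A' * (fx' - fox') <= A' * dl by apply: ler_wpM2l; lra.
have p2 : A' * fox' <= A' * (foy' + G + L' * Vxy + dl) by apply: ler_wpM2l; lra.
have p3 : A' * L' * Vxy <= A' * L' * (th ^+ 2 * Vuu).
  by apply: ler_wpM2l => //; apply: mulr_ge0; lra.
have p3' : A' * L' * (th ^+ 2 * Vuu) = Vuu by rewrite mulrA h7 mul1r.
have p4 : 0 <= Ak * (fxk - (foy' + Gx)) by apply: mulr_ge0.
have p5 : 0 <= a * (fz - (foy' + Gz)) by apply: mulr_ge0.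
rewrite p3' in p3.
have e2 : A' * (foy' + G + L' * Vxy + dl) = (Ak + a) * foy' + A' * G + A' * L' * Vxy + A' * dl.
  by rewrite eA; ring.
rewrite e2 hE in p2.
have e3 : A' * (fx' - fox') = A' * fx' - A' * fox' by ring.
rewrite e3 in p1.
have e4 : 2 * A' * dl = A' * dl + A' * dl by ring.
rewrite e4.
have e5 : Ak * (fxk - (foy' + Gx)) = Ak * fxk - Ak * foy' - Ak * Gx by ring.
have e6 : a * (fz - (foy' + Gz)) = a * fz - a * foy' - a * Gz by ring.
have e7 : (Ak + a) * foy' = Ak * foy' + a * foy' by ring.
have e8 : a * (Gu + Gz) = a * Gu + a * Gz by ring.
rewrite e5 in p4; rewrite e6 in p5; rewrite e7 e8 in p2.
lra.
Qed.

Lemma step (R : realType) n (Q : set 'rV[R]_n) f d fo go dl L Ak xk uk L' a A' y' u' x' z :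
  convex_set_E Q -> (forall z, Q z -> differentiable d z) ->
  (forall z, Q z -> is_oracle Q f d dl L z (fo z) (go z)) -> tri_scaling Q d 2 ->
  0 <= Ak -> 0 < L' -> Q xk -> Q uk -> Q z ->
  adap_trial Q d fo go Ak xk uk L' a A' y' u' x' ->
  adap_test d fo go dl L' y' x' ->
  A' * f x' <= Ak * f xk + a * f z + bregman d z uk - bregman d z u' + 2 * A' * dl.
Proof.
move=> cQ dQ orc ts A0 L0 Qx Qu Qz tr test.
have [a0 A'0 Qy Qu' Qx'] :=
  @trial_Q _ _ Q d fo go Ak xk uk L' a A' y' u' x' cQ A0 L0 Qx Qu tr.
case: tr => [[eq _] eA ey amin ex].
set th := a / A'.
have e1 : Ak / A' = 1 - th by rewrite /th eA; field; lra.
have ex2 : x' = (1 - th) *: xk + th *: u' by rewrite ex e1 addrC.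
have ey2 : y' = (1 - th) *: xk + th *: uk by rewrite ey e1 addrC.
have th01 : 0 <= th <= 1.
  apply/andP; split; first by apply: divr_ge0; lra.
  by rewrite ler_pdivrMr // mul1r; lra.
have h6 := ts xk u' uk th Qx Qu' Qu th01.
rewrite -ex2 -ey2 in h6.
have e2 : th `^ 2 = th ^+ 2 by rewrite (powR_mulrn 2) //; case/andP: th01.
rewrite e2 in h6.
have eA2 : A' = L' * a ^+ 2 by rewrite eA eq.
have h7 : A' * L' * th ^+ 2 = 1 by rewrite /th eA2; field; lra.
set g := go y'.
have V : A' *: (x' - y') = a *: (u' - y') + Ak *: (xk - y').
  rewrite ex; apply/rowP => i; rewrite !mxE eA; field; lra.
have hE : A' * dual_pair g (x' - y') =
    a * (dual_pair g (u' - z) + dual_pair g (z - y')) + Ak * dual_pair g (xk - y').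
  rewrite -dpZ V [LHS]dpD !dpZ; congr (a * _ + _).
  by rewrite -dpD addrA subrK.
have [h1 _] := orc y' Qy xk Qx.
have [h2 _] := orc y' Qy z Qz.
have [_ h3] := orc x' Qx' x' Qx'.
rewrite subrr dp0 addr0 breg_self mulr0 add0r in h3.
have h5 := @three_point _ _ Q d a g y' uk u' z cQ dQ amin Qz.
exact: (arith_step eA A'0 A0 (ltW a0) L0 hE h1 h2 h3 test h5 h6 h7).
Qed.
Lemma sq_le {R : realFieldType} {p q : R} : 0 <= q -> p ^+ 2 <= q ^+ 2 -> p <= q.
Proof.
move=> q0 h; rewrite leNgt; apply/negP => qp.
have : q * q < p * p by apply: ltr_pM => //.
rewrite !expr2 in h; lra.
Qed.

Lemma sq_mono {R : realFieldType} {p q : R} : 0 <= p -> p <= q -> p ^+ 2 <= q ^+ 2.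
Proof. move=> p0 pq; rewrite !expr2; apply: ler_pM => //. Qed.

Lemma arith_sq {R : realFieldType} {m s s' : R} :
  0 <= m -> 0 <= s -> s <= s' -> 0 < s' -> s' <= m * (s' ^+ 2 - s ^+ 2) ->
  1 <= 2 * m * (s' - s).
Proof.
move=> m0 s0 ss s'0 h.
have e : m * (s' ^+ 2 - s ^+ 2) = (m * (s' - s)) * (s' + s) by ring.
have h2 : (m * (s' - s)) * (s' + s) <= (m * (s' - s)) * (2 * s').
  by apply: ler_wpM2l; [apply: mulr_ge0; lra | lra].
have h3 : s' * 1 <= s' * (2 * m * (s' - s)).
  rewrite mulr1; have -> : s' * (2 * m * (s' - s)) = (m * (s' - s)) * (2 * s') by ring.
  lra.
by rewrite ler_pM2l in h3.
Qed.

Lemma arith_fin {R : realFieldType} {AN fx fs V0 VN S Rad L M : R} :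
  0 < AN -> 0 < M -> M <= 8 * L * AN -> 0 <= VN -> V0 <= Rad ^+ 2 ->
  AN * fx <= AN * fs + V0 - VN + 2 * S ->
  fx - fs <= 8 * L * Rad ^+ 2 / M + 2 * S / AN.
Proof.
move=> A0 M0 hM hV hR h.
have h1 : fx - fs <= (Rad ^+ 2 + 2 * S) / AN.
  rewrite ler_pdivlMr //; have -> : (fx - fs) * AN = AN * fx - AN * fs by ring.
  lra.
have h2 : Rad ^+ 2 / AN <= 8 * L * Rad ^+ 2 / M.
  rewrite ler_pdivrMr // mulrAC ler_pdivlMr //.
  have -> : 8 * L * Rad ^+ 2 * AN = Rad ^+ 2 * (8 * L * AN) by ring.
  by apply: ler_wpM2l => //; apply: sqr_ge0.
rewrite mulrDl in h1; lra.
Qed.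

Theorem theorem1 (R : realType) (n : nat) (nrm : 'rV[R]_n -> R)
  (Q : set 'rV[R]_n) (f d : 'rV[R]_n -> R) (L : R)
  (fo : nat -> 'rV[R]_n -> R) (go : nat -> 'rV[R]_n -> 'rV[R]_n)
  (delta : nat -> R) (x0 xs : 'rV[R]_n) (L0 Rad : R)
  (Ls al A : nat -> R) (y u x : nat -> 'rV[R]_n) (i : nat -> nat) :
  is_norm nrm ->
  closed Q -> convex_set_E Q ->
  (* f convex on Q, differentiable on an open set containing rint Q *)
  convex_fun_on Q f ->
  (exists U : set 'rV[R]_n, open U /\ rint nrm Q `<=` U /\
     forall z, U z -> differentiable f z) ->
  (* prox-function d: continuously differentiable, 1-strongly convex on Q *)
  (forall z, Q z -> differentiable d z) ->
  (forall v : 'rV[R]_n, {within Q, continuous (fun z => 'd d z v)}) ->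
  strongly_convex1_on nrm Q d ->
  0 < L -> rel_smooth nrm Q f d L ->
  tri_scaling Q d 2 ->
  (forall k, 0 < delta k) ->
  (forall k z, Q z -> is_oracle Q f d (delta k) L z (fo k z) (go k z)) ->
  Q x0 -> 0 < L0 -> L0 < 2 * L ->
  adapfgm_run Q d fo go delta x0 L0 Ls al A y u x i ->
  Q xs -> (forall z, Q z -> f xs <= f z) ->
  0 < Rad -> bregman d xs x0 <= Rad ^+ 2 ->
  forall N : nat, (1 <= N)%N ->
    f (x N) - f xs <= 8 * L * Rad ^+ 2 / (N%:R + 1) ^+ 2
                      + 2 * (\sum_(k < N) A k.+1 * delta k) / A N.
Proof.
move=> _ _ cQ _ _ dQ _ sc Lpos _ ts _ orc Qx0 L00 L02 run Qxs _ _ VR N N1.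
case: run => [eLs0 [eal0 eA0] [ey0 [eu0 ex0]] hk].
have inv : forall k, [/\ 0 < Ls k, Ls k < 2 * L, 0 <= A k, Q (x k) /\ Q (u k) &
   A k * f (x k) <= A k * f xs + bregman d xs x0 - bregman d xs (u k)
                    + 2 * \sum_(j < k) A j.+1 * delta j].
  elim=> [|k [Lp Ll Ap [Qxk Quk] IH]].
    rewrite eLs0 eA0 ex0 eu0 big_ord0; split => //; try by split.
    rewrite !mul0r mulr0; lra.
  have [eL tr test fails] := hk k.
  have L'0 : 0 < Ls k.+1.
    by rewrite eL; apply: mulr_gt0 => //; apply: divr_gt0 => //; exact: exprn_gt0.
  have [a0 A'0 Qy Qu' Qx'] := @trial_Q _ _ Q d (fo k) (go k) (A k) (x k) (u k)
     (Ls k.+1) (al k.+1) (A k.+1) (y k.+1) (u k.+1) (x k.+1) cQ Ap L'0 Qxk Quk tr.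
  have Lb : Ls k.+1 < 2 * L.
    case ik: (i k) => [|j].
      by rewrite eL ik expr0; lra.
    have jlt : (j < i k)%N by rewrite ik.
    have [a' [A'' [y'' [u'' [x'' [trj failj]]]]]] := fails j jlt.
    have Lj0 : 0 < 2 ^+ j / 2 * Ls k.
      by apply: mulr_gt0 => //; apply: divr_gt0 => //; exact: exprn_gt0.
    have : 2 ^+ j / 2 * Ls k < L.
      rewrite ltNge; apply/negP => LL; apply: failj.
      exact: (@trial_pass _ _ nrm Q f d (fo k) (go k) (delta k) L (A k) (x k) (u k)
        _ a' A'' y'' u'' x'' cQ sc dQ (orc k) Ap Lj0 LL Qxk Quk trj).
    have -> : Ls k.+1 = 2 * (2 ^+ j / 2 * Ls k) by rewrite eL ik exprS; ring.
    lra.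
  have st := @step _ _ Q f d (fo k) (go k) (delta k) L (A k) (x k) (u k)
     (Ls k.+1) (al k.+1) (A k.+1) (y k.+1) (u k.+1) (x k.+1) xs
     cQ dQ (orc k) ts Ap L'0 Qxk Quk Qxs tr test.
  split => //; first lra.
  case: tr => [_ eA _ _ _].
  rewrite big_ord_recr /=.
  have e1 : A k.+1 * f xs = A k * f xs + al k.+1 * f xs by rewrite eA mulrDl.
  rewrite e1; lra.
set m := Num.sqrt (2 * L).
have m0 : 0 <= m := sqrtr_ge0 _.
have mm : m ^+ 2 = 2 * L by rewrite sqr_sqrtr //; lra.
have sA : forall k, Num.sqrt (A k) ^+ 2 = A k.
  by move=> k; rewrite sqr_sqrtr //; case: (inv k).
have Apos : forall k, 0 < A k.+1.
  move=> k; have [_ tr _ _] := hk k; have [Lp _ Ap [Qxk Quk] _] := inv k.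
  have [Lp1 _ _ _ _] := inv k.+1.
  by have [_ ? _ _ _] := @trial_Q _ _ Q d (fo k) (go k) (A k) (x k) (u k)
     (Ls k.+1) (al k.+1) (A k.+1) (y k.+1) (u k.+1) (x k.+1) cQ Ap Lp1 Qxk Quk tr.
have lb : forall k, (k.+2)%:R <= 2 * m * Num.sqrt (A k.+1).
  elim=> [|k IHk].
    have [_ tr _ _] := hk 0%N; have [Lp _ Ap [Qxk Quk] _] := inv 0%N.
    have [Lp1 Lb1 _ _ _] := inv 1%N.
    have [a0 _ _ _ _] := @trial_Q _ _ Q d (fo 0%N) (go 0%N) (A 0%N) (x 0%N) (u 0%N)
     (Ls 1%N) (al 1%N) (A 1%N) (y 1%N) (u 1%N) (x 1%N) cQ Ap Lp1 Qxk Quk tr.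
    case: tr => [[eq _] eA _ _ _].
    rewrite eA0 add0r in eA eq.
    have e : Ls 1%N * al 1%N = 1.
      apply: (mulfI (lt0r_neq0 a0)); rewrite mulr1 [RHS]eq; ring.
    have h1 : 1 <= m * Num.sqrt (A 1%N).
      apply: sq_le; first by apply: mulr_ge0 => //; exact: sqrtr_ge0.
      rewrite exprMn mm sA expr1n eA.
      have : Ls 1%N * al 1%N <= 2 * L * al 1%N by apply: ler_wpM2r; lra.
      lra.
    have -> : (2%:R : R) = 2 by [].
    lra.
  have [_ tr _ _] := hk k.+1; have [Lp _ Ap [Qxk Quk] _] := inv k.+1.
  have [Lp1 Lb1 _ _ _] := inv k.+2.
  have [a0 _ _ _ _] := @trial_Q _ _ Q d (fo k.+1) (go k.+1) (A k.+1) (x k.+1) (u k.+1)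
     (Ls k.+2) (al k.+2) (A k.+2) (y k.+2) (u k.+2) (x k.+2) cQ Ap Lp1 Qxk Quk tr.
  case: tr => [[eq _] eA _ _ _].
  set s := Num.sqrt (A k.+1); set s' := Num.sqrt (A k.+2).
  have s0 : 0 <= s := sqrtr_ge0 _.
  have s'0 : 0 < s' by rewrite sqrtr_gt0.
  have ss : s <= s'.
    apply: sq_le; first exact: ltW.
    rewrite /s /s' !sA eA; lra.
  have ed : s' ^+ 2 - s ^+ 2 = al k.+2 by rewrite /s /s' !sA eA; ring.
  have h : s' <= m * (s' ^+ 2 - s ^+ 2).
    rewrite ed; apply: sq_le; first by apply: mulr_ge0 => //; lra.
    rewrite exprMn mm /s' sA eA eq.
    apply: ler_wpM2r; [exact: sqr_ge0 | lra].
  have := arith_sq m0 s0 ss s'0 h.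
  have -> : (k.+3%:R : R) = k.+2%:R + 1 by rewrite natr1.
  move=> HH.
  have IH' : k.+2%:R <= 2 * m * s by exact: IHk.
  lra.
case: N N1 => [//|k] _.
have [_ _ _ [_ QuN] IN] := inv k.+1.
have VN := @breg_nonneg _ _ nrm Q d xs (u k.+1) cQ sc Qxs QuN (dQ _ QuN).
have -> : (k.+1%:R + 1 : R) = k.+2%:R by rewrite natr1.
have M0 : 0 < (k.+2%:R : R) ^+ 2 by apply: exprn_gt0; rewrite ltr0n.
have hM : (k.+2%:R : R) ^+ 2 <= 8 * L * A k.+1.
  have := sq_mono (ler0n _ _) (lb k).
  rewrite !exprMn mm sA.
  have -> : (2 : R) ^+ 2 = 4 by rewrite expr2; lra.
  lra.
exact: arith_fin (Apos k) M0 hM VN VR IN.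
Qed.
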